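(* Let $G$ and $H$ be finite groups such that $|G|$ and $|H|$ have the same prime divisors, and let $\alpha\colon G\to\operatorname{Aut}(H)$ be an action by automorphisms. Then every connected component of $\mathcal{C}(\alpha)$ has diameter at most $4$ (i.e. any two vertices in the same connected component are joined by a path of length at most $4$).
   Context: For an action $\alpha$ of a finite group $G$ on a finite group $H$ by automorphisms, $\mathcal{C}(\alpha)$ is the simple undirected graph whose vertices are the non-trivial orbits of the action (orbits of size $>1$), two distinct vertices $L_1,L_2$ being adjacent if and only if $\gcd(|L_1|,|L_2|)\neq 1$. *)

(* Defs.v *)
From mathcomp Require Import all_boot all_order all_fingroup.
Set Implicit Arguments. Unset Strict Implicit. Unset Printing Implicit Defensive.


Section OrbitGraph.
Variables (aT rT : finGroupType) (G : {group aT}) (H : {group rT}).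
Variable to : groupAction G H.

Definition orbit_vertices : {set {set rT}} :=
  [set L in orbit to G @: H | 1 < #|L|].

Definition orbit_adj : rel {set rT} :=
  fun L1 L2 => (L1 != L2) && (gcdn #|L1| #|L2| != 1).

(* p is a walk in C(alpha) from L1 to L2 (its length is size p). *)
Definition orbit_walk (L1 L2 : {set rT}) (p : seq {set rT}) : Prop :=
  [/\ L1 \in orbit_vertices, all (mem orbit_vertices) p,
      path orbit_adj L1 p & last L1 p = L2].

End OrbitGraph.

(* Main.v *)
Require Import Defs.
From mathcomp Require Import all_boot all_order all_fingroup.
From mathcomp Require Import zify.
Set Implicit Arguments. Unset Strict Implicit. Unset Printing Implicit Defensive.
Open Scope group_scope.

Lemma stabR_dvd (gT : finGroupType) (S : {set gT}) : (#|'N(S | 'R)| %| #|S|)%N.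
Proof.
set K := 'N(S | 'R)%G.
have acts : [acts K, on S | 'R] by exact: subxx.
rewrite -(acts_sum_card_orbit acts).
rewrite (eq_bigr (fun _ => #|K|)) ?sum_nat_const ?dvdn_mull //.
by move=> T /imsetP[x Sx ->]; rewrite card_orbit astab1R setIg1 indexg1.
Qed.

Lemma stabR_mem (gT : finGroupType) (S : {set gT}) t :
  (forall s, s \in S -> s * t \in S) -> t \in 'N(S | 'R).
Proof.
move=> HS.
have sub : S :* t \subset S.
  by apply/subsetP=> u; rewrite mem_rcoset => /HS; rewrite -mulgA mulVg mulg1.
have eqS : S :* t = S by apply/eqP; rewrite eqEcard sub card_rcoset leqnn.
apply/astabsP=> x /=; rewrite -{1}eqS mem_rcoset -mulgA mulgV mulg1 //.
Qed.

Definition dgrp (gT : finGroupType) (A : {set gT}) :=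
  <<[set (u^-1 * v)%g | u in A, v in A]>>%G.

Definition arrow (gT : finGroupType) (A B : {set gT}) :=
  ((#|dgrp A| %| #|B|) && (#|dgrp A| %| #|dgrp B|))%N.

Lemma dgrp_card (gT : finGroupType) (A : {set gT}) a0 : a0 \in A -> #|A| <= #|dgrp A|.
Proof.
move=> Aa0; rewrite -(card_lcoset A a0^-1); apply: subset_leq_card.
apply/subsetP=> u; rewrite mem_lcoset invgK => Au.
apply: mem_gen; rewrite -[u](mulKg a0); apply/imset2P; exists a0 (a0 * u) => //.
Qed.

Lemma arrow_fork (gT : finGroupType) (A B C : {set gT}) :
  1 < #|dgrp A| -> arrow A B -> arrow A C -> coprime #|B| #|C| -> False.
Proof.
move=> gt1 /andP[dB _] /andP[dC _] cop.
have : (#|dgrp A| %| 1)%N by rewrite -(eqP cop) dvdn_gcd dB dC.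
by rewrite dvdn1 => /eqP e; rewrite e in gt1.
Qed.

Lemma arrow_chain (gT : finGroupType) (A B C : {set gT}) :
  1 < #|dgrp A| -> arrow A B -> arrow B C -> coprime #|B| #|C| -> False.
Proof.
move=> gt1 /andP[dB dd] /andP[dC _] cop.
have : (#|dgrp A| %| 1)%N by rewrite -(eqP cop) dvdn_gcd dB (dvdn_trans dd dC).
by rewrite dvdn1 => /eqP e; rewrite e in gt1.
Qed.

Section A.
Variables (aT rT : finGroupType) (G : {group aT}) (H : {group rT}).
Variable to : groupAction G H.

Notation O x := (orbit to G x).
Notation S x := ('C_G[x | to]%G).

Lemma stabP x g : (g \in 'C_G[x | to]) = (g \in G) && (to x g == x).
Proof. by rewrite !inE; case gG: (g \in G) => //=; rewrite sub1set inE. Qed.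

Lemma cardOS x : (#|O x| * #|S x|)%N = #|G|.
Proof. exact: card_orbit_in_stab. Qed.

Lemma cardO x : #|O x| = #|G : S x|.
Proof. exact: card_orbit_in. Qed.

Lemma actC x g h : g \in G -> h \in G -> to x (g * h) = to (to x g) h.
Proof. by move=> Gg Gh; apply: actMin. Qed.

Lemma actMH x y g : g \in G -> x \in H -> y \in H -> to (x * y) g = to x g * to y g.
Proof. by move=> Gg Hx Hy; apply: gactM. Qed.

Lemma actH x g : g \in G -> (to x g \in H) = (x \in H).
Proof. by move=> Gg; apply: (gact_stable to). Qed.

Lemma orbH x w : x \in H -> w \in O x -> w \in H.
Proof. by move=> Hx /imsetP[g Gg ->]; rewrite actH. Qed.

Lemma orb_act z w g : w \in O z -> g \in G -> to w g \in O z.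
Proof.
by move=> /imsetP[h Gh ->] Gg; rewrite -actC //; apply: mem_orbit; rewrite groupM.
Qed.

Lemma coprime_index x y : coprime #|O x| #|O y| ->
  #|G : S x :&: S y| = (#|O x| * #|O y|)%N /\ (S x * S y)%g = G.
Proof.
move=> cop.
set D := (S x :&: S y)%G.
have sxG : S x \subset G by apply: subsetIl.
have syG : S y \subset G by apply: subsetIl.
have dG : D \subset G by apply: subset_trans (subsetIl _ _) sxG.
have e1 : (#|O x| * #|O y| %| #|G : D|)%N.
  rewrite Gauss_dvd // !cardO; apply/andP; split; apply: indexgS.
    exact: subsetIl. exact: subsetIr.
have e2 := Lagrange dG.
have e3 := mul_cardG (S x) (S y).
have e4 := cardOS x. have e5 := cardOS y.
have sub : (S x * S y)%g \subset G by rewrite mulG_subG sxG syG.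
have e6 := subset_leq_card sub.
have gpos : (0 < #|G|)%N by apply: cardG_gt0.
have dpos : (0 < #|D|)%N by apply: cardG_gt0.
have ipos : (0 < #|G : D|)%N by apply: indexg_gt0.
have e7 := dvdn_leq ipos e1.
set a := #|O x| in e1 e4 e7 *; set b := #|O y| in e1 e5 e7 *.
set g := #|G| in e2 e4 e5 e6 gpos *.
set sx := #|S x| in e3 e4. set sy := #|S y| in e3 e5.
set m := #|(S x * S y)%g| in e3 e6 *.
set d := #|D| in e2 e3 dpos. set e := #|G : D| in e1 e2 e7 ipos *.
have gm : g <= m.
  have : (g * g <= m * g)%N.
    have -> : (g * g = a * b * (m * d))%N by rewrite -e3; nia.
    rewrite -e2; nia.
  by rewrite leq_pmul2r.
have mg : m = g by apply/eqP; rewrite eqn_leq e6 gm.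
split; last by apply/eqP; rewrite eqEcard sub -/m mg leqnn.
have : (a * b * d = e * d)%N.
  have -> : (a * b * d = g)%N.
    apply/eqP; rewrite -(eqn_pmul2r gpos); apply/eqP.
    have -> : (a * b * d * g = a * b * (m * d))%N by rewrite mg; nia.
    by rewrite -e3; nia.
  by rewrite mulnC.
by move/eqP; rewrite eqn_pmul2r // => /eqP.
Qed.

Lemma mulStab x y : coprime #|O x| #|O y| -> (S x * S y)%g = G.
Proof. by case/coprime_index. Qed.

Lemma prod_right x y x' : x \in H -> y \in H -> coprime #|O x| #|O y| ->
  x' \in O x -> x' * y \in O (x * y).
Proof.
move=> Hx Hy cop /imsetP[g Gg ->].
have /mulsgP[s t Ss St ->] : g \in (S x * S y)%g by rewrite mulStab.
move: Ss St; rewrite !stabP => /andP[Gs /eqP sx] /andP[Gt /eqP ty].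
rewrite actC // sx.
have -> : to x t * y = to (x * y) t by rewrite actMH // ty.
exact: mem_orbit.
Qed.

Lemma prod_left x y y' : x \in H -> y \in H -> coprime #|O x| #|O y| ->
  y' \in O y -> x * y' \in O (x * y).
Proof.
move=> Hx Hy cop /imsetP[g Gg ->].
have /mulsgP[t s St Ss ->] : g \in (S y * S x)%g by rewrite mulStab // coprime_sym.
move: Ss St; rewrite !stabP => /andP[Gs /eqP sx] /andP[Gt /eqP ty].
rewrite actC // ty.
have -> : x * to y s = to (x * y) s by rewrite actMH // sx.
exact: mem_orbit.
Qed.

Lemma prod_both x y x' y' : x \in H -> y \in H -> coprime #|O x| #|O y| ->
  x' \in O x -> y' \in O y -> x' * y' \in O (x * y).
Proof.
move=> Hx Hy cop Ox' /imsetP[g Gg ->].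
have Gg' : g^-1 \in G by rewrite groupV.
have Ox'' : to x' g^-1 \in O x by apply: orb_act.
have Hx' : x' \in H by apply: orbH Ox'.
have := orb_act (prod_right Hx Hy cop Ox'') Gg.
rewrite actMH // ?actH // -actC // mulVg.
by rewrite (act1 to).
Qed.

Lemma stab_sub x y : x \in H -> y \in H ->
  S x :&: S y \subset S (x * y).
Proof.
move=> Hx Hy; apply/subsetP=> g; rewrite inE !stabP => /andP[/andP[Gg /eqP ex] /andP[_ /eqP ey]].
by rewrite Gg actMH // ex ey eqxx.
Qed.

Lemma orbit_prod_dvd x y : x \in H -> y \in H -> coprime #|O x| #|O y| ->
  (#|O (x * y)| %| #|O x| * #|O y|)%N.
Proof.
move=> Hx Hy cop; have [<- _] := coprime_index cop.
by rewrite cardO; apply: indexgS; apply: stab_sub.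
Qed.

Lemma arrowBA x y : x \in H -> y \in H -> coprime #|O x| #|O y| ->
  #|O (x * y)| = #|O x| -> arrow (O y) (O x).
Proof.
move=> Hx Hy cop eqc.
set A := O x.
have eqN : A :* y = O (x * y).
  apply/eqP; rewrite eqEcard card_rcoset eqc leqnn andbT.
  apply/subsetP=> u; rewrite mem_rcoset => Au.
  by rewrite -[u](mulgKV y); apply: prod_right.
set K := 'N(A | 'R)%G.
have Ky : forall y1, y1 \in O y -> y1 * y^-1 \in K.
  move=> y1 Oy1; apply: stabR_mem => s As.
  have : s * y1 \in A :* y by rewrite eqN; apply: prod_both.
  by rewrite mem_rcoset mulgA.
have DK : dgrp (O y) \subset K :^ y.
  rewrite gen_subG; apply/subsetP=> u /imset2P[y1 y2 Oy1 Oy2 ->].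
  rewrite mem_conjg conjgE invgK.
  have -> : y * (y1^-1 * y2 * y^-1) = (y1 * y^-1)^-1 * (y2 * y^-1).
    by rewrite invMg invgK !mulgA.
  by rewrite groupM ?groupV ?Ky.
have KD : K \subset dgrp A.
  apply/subsetP=> t Kt; have Ax : x \in A by apply: orbit_refl.
  have Axt : x * t \in A by move/astabsP: Kt => /(_ x) /= ->.
  by apply: mem_gen; rewrite -[t](mulKg x); apply/imset2P; exists x (x * t).
apply/andP; split.
  apply: dvdn_trans (cardSg DK) _; rewrite cardJg; exact: stabR_dvd.
have sub : dgrp (O y) \subset (dgrp A :^ y)%G by apply: subset_trans DK _; rewrite conjSg.
by apply: dvdn_trans (cardSg sub) _; rewrite cardJg.
Qed.

Lemma arrowAB x y : x \in H -> y \in H -> coprime #|O x| #|O y| ->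
  #|O (x * y)| = #|O y| -> arrow (O x) (O y).
Proof.
move=> Hx Hy cop eqc.
set B := O y.
have eqN : x *: B = O (x * y).
  apply/eqP; rewrite eqEcard card_lcoset eqc leqnn andbT.
  apply/subsetP=> u; rewrite mem_lcoset => Bu.
  by rewrite -[u](mulKVg x); apply: prod_left.
set K := 'N(B^-1 | 'R)%G.
have Kx : forall x1, x1 \in O x -> x^-1 * x1 \in K.
  move=> x1 Ox1; rewrite -groupV; apply: stabR_mem => s Bs.
  rewrite mem_invg invMg invgK.
  have : x1 * s^-1 \in x *: B by rewrite eqN; apply: prod_both => //; rewrite -mem_invg.
  by rewrite mem_lcoset mulgA.
have DK : dgrp (O x) \subset K.
  rewrite gen_subG; apply/subsetP=> u /imset2P[x1 x2 Ox1 Ox2 ->].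
  have -> : x1^-1 * x2 = (x^-1 * x1)^-1 * (x^-1 * x2).
    by rewrite invMg invgK !mulgA mulgK.
  by rewrite groupM ?groupV ?Kx.
have KD : K \subset dgrp B :^ y^-1.
  apply/subsetP=> t Kt; rewrite mem_conjgV conjgE.
  have By : y \in B by apply: orbit_refl.
  have : y^-1 * t^-1 \in B^-1.
    have Kt' : t^-1 \in K by rewrite groupV.
    by move/astabsP: Kt' => /(_ y^-1) /= ->; rewrite mem_invg invgK.
  rewrite mem_invg invMg !invgK => Bty.
  by apply: mem_gen; apply/imset2P; exists y (t * y).
apply/andP; split.
  apply: dvdn_trans (cardSg DK) _; rewrite -(card_invg B); exact: stabR_dvd.
have sub : dgrp (O x) \subset (dgrp B :^ y^-1)%G := subset_trans DK KD.
by apply: dvdn_trans (cardSg sub) _; rewrite cardJg.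
Qed.

Lemma vert_dd A : A \in orbit_vertices to -> 1 < #|dgrp A|.
Proof.
rewrite inE => /andP[/imsetP[x Hx ->] a1].
apply: leq_trans a1 (dgrp_card (orbit_refl _ _ _)).
Qed.

Lemma far A B : A \in orbit_vertices to -> B \in orbit_vertices to ->
  coprime #|A| #|B| ->
  (exists N, [/\ N \in orbit_vertices to, orbit_adj A N & orbit_adj N B])
  \/ arrow A B \/ arrow B A.
Proof.
rewrite !inE => /andP[/imsetP[x Hx ->] a1] /andP[/imsetP[y Hy ->] b1] cop.
have Hz : x * y \in H by rewrite groupM.
have ca : #|O x| <= #|O (x * y)|.
  rewrite -(card_rcoset _ y); apply: subset_leq_card; apply/subsetP=> u.
  by rewrite mem_rcoset => Au; rewrite -[u](mulgKV y); apply: prod_right.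
have cb : #|O y| <= #|O (x * y)|.
  rewrite -(card_lcoset _ x); apply: subset_leq_card; apply/subsetP=> u.
  by rewrite mem_lcoset => Bu; rewrite -[u](mulKVg x); apply: prod_left.
have cdvd := orbit_prod_dvd Hx Hy cop.
have apos : 0 < #|O x| by apply: leq_trans a1.
have bpos : 0 < #|O y| by apply: leq_trans b1.
case: (eqVneq (gcdn #|O (x * y)| #|O y|) 1%N) => [gb | gb].
  right; right; apply: arrowBA => //.
  have : (#|O (x * y)| %| #|O x|)%N by rewrite -(Gauss_dvdl _ (introT eqP gb)).
  by move/(dvdn_leq apos) => le; apply/eqP; rewrite eqn_leq le ca.
case: (eqVneq (gcdn #|O (x * y)| #|O x|) 1%N) => [ga | ga].
  right; left; apply: arrowAB => //.
  have : (#|O (x * y)| %| #|O y|)%N by rewrite -(Gauss_dvdl _ (introT eqP ga)) mulnC.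
  by move/(dvdn_leq bpos) => le; apply/eqP; rewrite eqn_leq le cb.
left; exists (O (x * y)); split.
- by rewrite /orbit_vertices inE imset_f //=; apply: leq_trans a1 ca.
- rewrite /orbit_adj gcdnC ga andbT; apply/eqP=> e.
  by move: gb; rewrite -e (eqP cop) eqxx.
- rewrite /orbit_adj gb andbT; apply/eqP=> e.
  by move: ga; rewrite e gcdnC (eqP cop) eqxx.
Qed.

Notation V := (orbit_vertices to).
Definition Wk k u w := exists q, orbit_walk to u w q /\ size q <= k.

Lemma W0 u : u \in V -> Wk 0 u u.
Proof. by move=> Vu; exists [::]; split. Qed.

Lemma W1 u w : u \in V -> w \in V -> orbit_adj u w -> Wk 1 u w.
Proof. by move=> Vu Vw a; exists [:: w]; split => //; split => //=; rewrite ?Vw ?a. Qed.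

Lemma Wle m n u w : m <= n -> Wk m u w -> Wk n u w.
Proof. by move=> le [q [wq sq]]; exists q; split => //; apply: leq_trans le. Qed.

Lemma Wcat m n u v w : Wk m u v -> Wk n v w -> Wk (m + n) u w.
Proof.
move=> [q1 [[Vu a1 p1 l1] s1]] [q2 [[Vv a2 p2 l2] s2]].
exists (q1 ++ q2); split; last by rewrite size_cat leq_add.
split => //; first by rewrite all_cat a1 a2.
  by rewrite cat_path p1 l1.
by rewrite last_cat l1.
Qed.

Lemma Wnear u w : u \in V -> w \in V -> ~~ coprime #|u| #|w| -> Wk 1 u w.
Proof.
move=> Vu Vw nc; case: (eqVneq u w) => [-> | ne].
  by apply: (Wle (m := 0)) => //; apply: W0.
by apply: W1 => //; rewrite /orbit_adj ne.
Qed.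

Lemma short5 v0 v1 v2 v3 v4 v5 :
  v0 \in V -> v1 \in V -> v2 \in V -> v3 \in V -> v4 \in V -> v5 \in V ->
  orbit_adj v0 v1 -> orbit_adj v1 v2 -> orbit_adj v2 v3 -> orbit_adj v3 v4 ->
  orbit_adj v4 v5 -> Wk 4 v0 v5.
Proof.
move=> V0 V1 V2 V3 V4 V5 a01 a12 a23 a34 a45.
have w01 := W1 V0 V1 a01. have w12 := W1 V1 V2 a12. have w23 := W1 V2 V3 a23.
have w34 := W1 V3 V4 a34. have w45 := W1 V4 V5 a45.
have w02 : Wk 2 v0 v2 := Wcat w01 w12.
have w35 : Wk 2 v3 v5 := Wcat w34 w45.
have w25 : Wk 3 v2 v5 := Wcat w23 w35.
have w03 : Wk 3 v0 v3 := Wcat w02 w23.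
case: (boolP (coprime #|v0| #|v5|)) => c05; last first.
  by apply: (Wle (m := 1)) => //; apply: Wnear.
case: (boolP (coprime #|v0| #|v3|)) => c03; last first.
  by apply: (Wle (m := 1 + 2)) => //; apply: Wcat w35; apply: Wnear.
case: (boolP (coprime #|v2| #|v5|)) => c25; last first.
  by apply: (Wle (m := 2 + 1)) => //; apply: Wcat w02 _; apply: Wnear.
case: (boolP (coprime #|v3| #|v5|)) => c35; last first.
  by apply: (Wle (m := 3 + 1)) => //; apply: Wcat w03 _; apply: Wnear.
case: (boolP (coprime #|v0| #|v2|)) => c02; last first.
  by apply: (Wle (m := 1 + 3)) => //; apply: Wcat w25; apply: Wnear.
have d0 := vert_dd V0. have d5 := vert_dd V5.
have d3 := vert_dd V3. have d2 := vert_dd V2.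
have [[N [VN aN1 aN2]] | [ar05 | ar50]] := far V0 V5 c05.
  by apply: (Wle (m := 1 + 1)) => //; apply: Wcat (W1 V0 VN aN1) (W1 VN V5 aN2).
- have [[N [VN aN1 aN2]] | [ar03 | ar30]] := far V0 V3 c03.
  + apply: (Wle (m := (1 + 1) + 2)) => //; apply: Wcat w35.
    exact: Wcat (W1 V0 VN aN1) (W1 VN V3 aN2).
  + by case: (arrow_fork d0 ar03 ar05 c35).
  + by case: (arrow_chain d3 ar30 ar05 c05).
- have [[N [VN aN1 aN2]] | [ar25 | ar52]] := far V2 V5 c25.
  + apply: (Wle (m := 2 + (1 + 1))) => //; apply: Wcat w02 _.
    exact: Wcat (W1 V2 VN aN1) (W1 VN V5 aN2).
  + by case: (arrow_chain d2 ar25 ar50); rewrite coprime_sym.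
  + by case: (arrow_fork d5 ar50 ar52 c02).
Qed.

Lemma shorten n L1 L2 p : size p <= n -> orbit_walk to L1 L2 p -> Wk 4 L1 L2.
Proof.
elim: n L1 p => [|n IH] L1 p.
  by case: p => // _ wp; exists [::]; split.
case: p => [|v1 [|v2 [|v3 [|v4 [|v5 rest]]]]] sz wp;
  try by exists [:: v1; v2; v3; v4]; split.
- by exists [::]; split.
- by exists [:: v1]; split.
- by exists [:: v1; v2]; split.
- by exists [:: v1; v2; v3]; split.
case: wp => VL1 /= /and5P[V1 V2 V3 V4 /andP[V5 Vr]].
move=> /and5P[a1 a2 a3 a4 /andP[a5 pr]] lr.
have [q [[_ aq pq lq] sq]] := short5 VL1 V1 V2 V3 V4 V5 a1 a2 a3 a4 a5.
apply: (IH L1 (q ++ rest)).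
  rewrite size_cat; move: sz; rewrite /= !ltnS => sz.
  by apply: leq_trans sz; apply: leq_trans (leq_add sq (leqnn _)) _.
split => //; first by rewrite all_cat aq Vr.
  by rewrite cat_path pq lq.
by rewrite last_cat lq.
Qed.

End A.

Close Scope group_scope.

Theorem mainTheorem3 (aT rT : finGroupType) (G : {group aT}) (H : {group rT})
    (to : groupAction G H) :
  primes #|G| = primes #|H| ->
  forall L1 L2 : {set rT},
    (exists p, orbit_walk to L1 L2 p) ->
    exists p, orbit_walk to L1 L2 p /\ size p <= 4.
Proof.
move=> _ L1 L2 [p wp].
exact: (shorten (leqnn (size p)) wp).
Qed.
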